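(* Let $A\subset\mathbb{R}^d$ have positive reach and let $B\subset\mathbb{R}^d$ satisfy $A\subset B\subset\mathrm{UP}(A)$. If $B$ is star-shaped relative to $A$, i.e. for every $p\in B$ the line segment from $p$ to $\xi_A(p)$ is contained in $B$, then $B$ deformation retracts onto $A$.
   Context: For closed $A\subset\mathbb{R}^d$: $\mathrm{UP}(A)$ is the set of points of $\mathbb{R}^d$ with a unique nearest point in $A$, $\xi_A:\mathrm{UP}(A)\to A$ maps a point to that nearest point, $\mathrm{Med}(A)=\mathbb{R}^d\setminus\mathrm{UP}(A)$, and the reach is $\tau_A=\inf_{p\in A}d(p,\mathrm{Med}(A))$; positive reach means $\tau_A>0$. *)

(* Defs.v *)
(* R^d is 'rV[R]_d over a realType R,
   with the EUCLIDEAN distance defined explicitly (the library's norm on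
   'rV is the sup norm; nearest points depend on the norm).  The topology
   on 'rV[R]_d (product topology) coincides with the Euclidean one. *)
From HB Require Import structures.
From mathcomp Require Import all_boot all_order all_algebra.
From mathcomp Require Import all_classical all_reals all_analysis.
Set Implicit Arguments. Unset Strict Implicit. Unset Printing Implicit Defensive.
Import Order.TTheory GRing.Theory Num.Theory.
Import numFieldNormedType.Exports.
Local Open Scope classical_set_scope.
Local Open Scope ring_scope.

Section Reach.
Variables (R : realType) (d : nat).
Notation V := 'rV[R]_d.

Definition edist (x y : V) : R := Num.sqrt (\sum_(i < d) (x ord0 i - y ord0 i) ^+ 2).

Definition is_nearest (A : set V) (x p : V) : Prop :=
  A p /\ forall q, A q -> edist x p <= edist x q.

Definition UP (A : set V) : set V := [set x | exists! p, is_nearest A x p].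

Definition Med (A : set V) : set V := ~` UP A.

(* xi_A : UP(A) -> A, the nearest point map (arbitrary outside UP(A)) *)
Definition xi (A : set V) (x : V) : V := get (is_nearest A x).

(* d(p, S) as an extended real (inf of the empty set is +oo) *)
Definition setdist (p : V) (S : set V) : \bar R :=
  ereal_inf [set (edist p m)%:E | m in S].

Definition reach (A : set V) : \bar R :=
  ereal_inf [set setdist p (Med A) | p in A].

Definition positive_reach (A : set V) : Prop := closed A /\ (0 < reach A)%E.

Definition segment (p q : V) : set V :=
  [set (1 - t) *: p + t *: q | t in [set t : R | 0 <= t <= 1]].

Definition star_shaped_rel (A B : set V) : Prop :=
  forall p, B p -> segment p (xi A p) `<=` B.

Definition deformation_retracts_onto (B A : set V) : Prop :=
  exists H : V * R -> V,
    {within B `*` [set t : R | 0 <= t <= 1], continuous H} /\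
    (forall x t, B x -> 0 <= t <= 1 -> B (H (x, t))) /\
    (forall x, B x -> H (x, 0) = x) /\
    (forall x, B x -> A (H (x, 1))) /\
    (forall a t, A a -> 0 <= t <= 1 -> H (a, t) = a).

End Reach.

(* Main.v *)
From Pilot Require Import Defs.
From HB Require Import structures.
From mathcomp Require Import all_boot all_order all_algebra.
From mathcomp Require Import all_classical all_reals all_analysis.
From mathcomp Require Import ring lra.
Import Order.TTheory GRing.Theory Num.Theory.
Import numFieldNormedType.Exports.
Local Open Scope classical_set_scope.
Local Open Scope ring_scope.
Local Notation edist := Pilot.Defs.edist.

Lemma CS_sum (R : realType) (n : nat) (a b : 'I_n -> R) :
  (\sum_i a i * b i) ^+ 2 <= (\sum_i a i ^+ 2) * (\sum_i b i ^+ 2).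
Proof.
rewrite -subr_ge0.
have E : (\sum_i a i ^+ 2) * (\sum_i b i ^+ 2) - (\sum_i a i * b i) ^+ 2
   = (\sum_i \sum_j (a i * b j - a j * b i) ^+ 2) / 2.
  have -> : \sum_i \sum_j (a i * b j - a j * b i) ^+ 2 =
     \sum_i \sum_j (a i ^+ 2 * b j ^+ 2) + \sum_i \sum_j (a j ^+ 2 * b i ^+ 2)
     - 2 * \sum_i \sum_j (a i * b i * (a j * b j)).
    rewrite -big_split /= mulr_sumr -sumrB; apply: eq_bigr => i _.
    rewrite -big_split /= mulr_sumr -sumrB; apply: eq_bigr => j _.
    ring.
  have PR : forall f g : 'I_n -> R, \sum_i \sum_j f i * g j = (\sum_i f i) * (\sum_j g j).
    by move=> f g; rewrite mulr_suml; apply: eq_bigr => i _; rewrite mulr_sumr.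
  rewrite (exchange_big _ _ _ _ _ (fun i j => a j ^+ 2 * b i ^+ 2)) /=.
  rewrite !PR.
  by rewrite expr2; field.
rewrite E; apply: divr_ge0 => //; apply: sumr_ge0 => i _; apply: sumr_ge0 => j _.
exact: sqr_ge0.
Qed.

Definition nrm {R : realType} {d : nat} (u : 'rV[R]_d) : R :=
  Num.sqrt (\sum_i u ord0 i ^+ 2).

Lemma edistE {R : realType} {d : nat} (x y : 'rV[R]_d) : edist x y = nrm (x - y).
Proof. by rewrite /edist /nrm; congr Num.sqrt; apply: eq_bigr => i _; rewrite !mxE. Qed.

Lemma nrm_ge0 {R : realType} {d : nat} (u : 'rV[R]_d) : 0 <= nrm u.
Proof. exact: sqrtr_ge0. Qed.

Lemma nrm_triangle {R : realType} {d : nat} (u v : 'rV[R]_d) :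
  nrm (u + v) <= nrm u + nrm v.
Proof.
have hA : 0 <= \sum_i u ord0 i ^+ 2 by apply: sumr_ge0 => i _; exact: sqr_ge0.
have hB : 0 <= \sum_i v ord0 i ^+ 2 by apply: sumr_ge0 => i _; exact: sqr_ge0.
rewrite -(ger0_norm (addr_ge0 (nrm_ge0 u) (nrm_ge0 v))) -sqrtr_sqr /nrm.
rewrite ler_sqrt ?sqr_ge0 //.
have -> : \sum_i (u + v) ord0 i ^+ 2 = \sum_i u ord0 i ^+ 2 + \sum_i v ord0 i ^+ 2
     + 2 * \sum_i u ord0 i * v ord0 i.
  rewrite mulr_sumr -!big_split /=; apply: eq_bigr => i _; rewrite mxE; ring.
rewrite sqrrD !sqr_sqrtr //.
suff hS : \sum_i u ord0 i * v ord0 i <=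
   Num.sqrt (\sum_i u ord0 i ^+ 2) * Num.sqrt (\sum_i v ord0 i ^+ 2).
  rewrite -mulr_natl; lra.
rewrite -sqrtrM //.
apply: le_trans (ler_norm _) _.
rewrite -sqrtr_sqr ler_sqrt; last by apply: mulr_ge0.
exact: CS_sum.
Qed.

Lemma edist_triangle {R : realType} {d : nat} (x y z : 'rV[R]_d) :
  edist x z <= edist x y + edist y z.
Proof.
rewrite !edistE; have -> : x - z = (x - y) + (y - z) by rewrite addrA subrK.
exact: nrm_triangle.
Qed.

Lemma edist_ge0 {R : realType} {d : nat} (x y : 'rV[R]_d) : 0 <= edist x y.
Proof. exact: sqrtr_ge0. Qed.

Lemma edistC {R : realType} {d : nat} (x y : 'rV[R]_d) : edist x y = edist y x.
Proof. by rewrite /edist; congr Num.sqrt; apply: eq_bigr => i _; rewrite -sqrrN opprB. Qed.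

Lemma edistxx {R : realType} {d : nat} (x : 'rV[R]_d) : edist x x = 0.
Proof. by rewrite /edist big1 ?sqrtr0 // => i _; rewrite subrr expr0n. Qed.

Lemma edist_eq0 {R : realType} {d : nat} (x y : 'rV[R]_d) : edist x y = 0 -> x = y.
Proof.
move/eqP; rewrite sqrtr_eq0 => h.
have h0 : \sum_i (x ord0 i - y ord0 i) ^+ 2 = 0.
  by apply/eqP; rewrite eq_le h; apply: sumr_ge0 => i _; exact: sqr_ge0.
apply/matrixP => i j; rewrite (ord1 i).
have := psumr_eq0P (fun i _ => sqr_ge0 (x ord0 i - y ord0 i)) h0 (i := j) isT.
by move/eqP; rewrite sqrf_eq0 subr_eq0 => /eqP.
Qed.

Lemma coord_le_edist {R : realType} {d : nat} (x y : 'rV[R]_d) (i : 'I_d) :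
  `|x ord0 i - y ord0 i| <= edist x y.
Proof.
rewrite -sqrtr_sqr ler_sqrt; last by apply: sumr_ge0 => j _; exact: sqr_ge0.
rewrite (bigD1 i) //= lerDl; apply: sumr_ge0 => j _; exact: sqr_ge0.
Qed.

Lemma supn_le_edist {R : realType} {d : nat} (x y : 'rV[R]_d) :
  `|x - y| <= edist x y.
Proof.
rewrite [leLHS]/Num.norm /= mx_normrE.
apply: bigmax_le => [|[i j] _]; first exact: edist_ge0.
by rewrite (ord1 i) /= !mxE; apply: coord_le_edist.
Qed.

Lemma coord_le_supn {R : realType} {d : nat} (u : 'rV[R]_d) (j : 'I_d) :
  `|u ord0 j| <= `|u|.
Proof.
rewrite [leRHS]/Num.norm /= mx_normrE.
exact: (le_bigmax_cond _ (j := (ord0, j)) (fun ij : 'I_1 * 'I_d => `|u ij.1 ij.2|)).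
Qed.

Lemma edist_le_supn {R : realType} {d : nat} (x y : 'rV[R]_d) :
  edist x y <= Num.sqrt d%:R * `|x - y|.
Proof.
rewrite -(ger0_norm (normr_ge0 (x - y))) -sqrtr_sqr -sqrtrM // ler_sqrt;
  last by apply: mulr_ge0 => //; exact: sqr_ge0.
have -> : d%:R * `|x - y| ^+ 2 = \sum_(i < d) `|x - y| ^+ 2.
  by rewrite sumr_const card_ord mulr_natl.
apply: ler_sum => i _.
rewrite -real_normK ?num_real //.
have := coord_le_supn (x - y) i; rewrite !mxE => h.
rewrite -[leLHS]ger0_norm ?sqr_ge0 // normrX lerXn2r ?nnegrE //.
by rewrite normr_id.
Qed.

Lemma xi_nearest {R : realType} {d : nat} (A : set 'rV[R]_d) x :
  UP A x -> is_nearest A x (xi A x).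
Proof. by case=> p [hp _]; apply: getPex; exists p. Qed.

Lemma xi_unique {R : realType} {d : nat} (A : set 'rV[R]_d) x p :
  UP A x -> is_nearest A x p -> p = xi A x.
Proof.
move=> hU hp; have hx := xi_nearest _ _ hU; case: hU => q [hq uq].
by rewrite -(uq _ hp) (uq _ hx).
Qed.

Lemma xi_id {R : realType} {d : nat} (A : set 'rV[R]_d) a :
  A a -> xi A a = a.
Proof.
move=> Aa.
have hn : is_nearest A a a by split => // q _; rewrite edistxx edist_ge0.
have [_ h] : is_nearest A a (xi A a) by apply: getPex; exists a.
symmetry; apply: edist_eq0; apply/eqP; rewrite eq_le edist_ge0 andbT.
by have := h a Aa; rewrite edistxx.
Qed.

Lemma A_UP {R : realType} {d : nat} (A : set 'rV[R]_d) a : A a -> UP A a.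
Proof.
move=> Aa; exists a; split; first by split => // q _; rewrite edistxx edist_ge0.
move=> p [_ h]; apply: edist_eq0; apply/eqP; rewrite eq_le edist_ge0 andbT.
by have := h a Aa; rewrite edistxx.
Qed.

Lemma edist_lip {R : realType} {d : nat} (x p q : 'rV[R]_d) :
  `|edist x p - edist x q| <= edist p q.
Proof.
have h1 := edist_triangle x q p; have h2 := edist_triangle x p q.
rewrite (edistC q p) in h1.
rewrite ler_norml; apply/andP; split; lra.
Qed.

Lemma near_supn {R : realType} {d : nat} (p : 'rV[R]_d) (r : R) :
  0 < r -> \forall q \near p, `|p - q| < r.
Proof.
move=> r0; have /cvgrPdist_lt H : (fun q : 'rV[R]_d => q) @ nbhs p --> p by exact: cvg_id.
exact: H.
Qed.

Lemma edist_cont {R : realType} {d : nat} (x : 'rV[R]_d) :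
  continuous (fun p => edist x p).
Proof.
move=> p; apply/(@cvgrPdist_lt _ _ _ _ (nbhs_filter p)) => e e0.
have k0 : 0 < Num.sqrt (d%:R : R) + 1 by apply: (lt_le_trans ltr01); rewrite lerDr sqrtr_ge0.
near=> q.
apply: le_lt_trans (edist_lip x p q) _.
apply: le_lt_trans (edist_le_supn p q) _.
have hq : `|p - q| < e / (Num.sqrt d%:R + 1).
  near: q; apply: near_supn; exact: divr_gt0.
rewrite ltr_pdivlMr // in hq.
have := sqrtr_ge0 (d%:R : R); have := normr_ge0 (p - q); nra.
Unshelve. all: by end_near.
Qed.

Lemma xi_cont {R : realType} {d : nat} (A : set 'rV[R]_d) x :
  closed A -> UP A x -> forall e : R, 0 < e ->
  exists2 r : R, 0 < r & forall y, UP A y -> `|x - y| < r -> `|xi A x - xi A y| < e.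
Proof.
move=> cA hx e e0.
set p0 := xi A x.
have [Ap0 np0] := xi_nearest _ _ hx.
set dl := edist x p0.
have [eta eta0 heta] : exists2 eta : R, 0 < eta &
    forall p, A p -> edist x p < dl + eta -> edist p0 p < e.
  pose K := A `&` [set p | edist x p <= dl + 1] `&` [set p | e <= edist p0 p].
  have Kfar : forall p, K p -> dl < edist x p.
    move=> p [[Ap _] hp]; rewrite lt_neqAle np0 // andbT; apply/negP => /eqP hdp.
    have epp : p = p0.
      by apply: xi_unique hx _; split => // q Aq; rewrite -hdp np0.
    by move: hp; rewrite /= epp edistxx; lra.
  case: (pselect (K !=set0)) => [K0|K0]; last first.
    exists 1 => // p Ap hp; rewrite ltNge; apply/negP => he; apply: K0.
    by exists p; split => //; split => //; rewrite /= ltW.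
  have cK : compact K.
    apply: bounded_closed_compact.
      case: K0 => k Kk.
      apply/(@ex_bound _ _ _ _ _ (globally_properfilter Kk)).
      exists (`|x| + (dl + 1)) => p [[Ap hp] _] /=.
      have -> : p = x + (p - x) by rewrite addrC subrK.
      apply: le_trans (ler_normD _ _) _; rewrite lerD2l.
      apply: le_trans (supn_le_edist _ _) _; by rewrite edistC.
    apply: closedI; first apply: closedI => //.
      have := (continuous_closedP _).1 (edist_cont x) _ (@closed_le R (dl + 1)).
      exact.
    have := (continuous_closedP _).1 (edist_cont p0) _ (@closed_ge R e).
    exact.
  have [c Kc cmin] := compact_EVT_min K0 cK (continuous_subspaceT (edist_cont x)).
  rewrite inE in Kc.
  have hc := Kfar c Kc.
  exists (Num.min (edist x c - dl) 1); first by rewrite lt_min subr_gt0 hc ltr01.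
  move=> p Ap hp; rewrite ltNge; apply/negP => he.
  have m1 : Num.min (edist x c - dl) 1 <= edist x c - dl by rewrite ge_min lexx.
  have m2 : Num.min (edist x c - dl) 1 <= 1 by rewrite ge_min lexx orbT.
  have Kp : K p by split => //; split => //=; lra.
  have := cmin p (mem_set Kp); lra.
have s0 := sqrtr_ge0 (d%:R : R).
have k0 : 0 < Num.sqrt (d%:R : R) + 1 by apply: (lt_le_trans ltr01); rewrite lerDr.
exists (eta / (2 * (Num.sqrt (d%:R : R) + 1))).
  by apply: divr_gt0 => //; apply: mulr_gt0.
move=> y hy hxy.
have h1 : edist x y < eta / 2.
  apply: le_lt_trans (edist_le_supn x y) _.
  rewrite ltr_pdivlMr ?mulr_gt0 // in hxy.
  rewrite ltr_pdivlMr //.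
  have := normr_ge0 (x - y); nra.
have [Ay ny] := xi_nearest _ _ hy.
have h2 : edist y (xi A y) <= edist y x + dl.
  by apply: le_trans (ny p0 Ap0) _; exact: edist_triangle.
have h3 := edist_triangle x y (xi A y).
rewrite (edistC y x) in h2.
have := heta _ Ay ltac:(lra) => h4.
exact: le_lt_trans (supn_le_edist _ _) h4.
Qed.

Theorem mainTheorem13 (R : realType) (d : nat) (A B : set 'rV[R]_d) :
  positive_reach A ->
  A `<=` B -> B `<=` UP A ->
  star_shaped_rel A B ->
  deformation_retracts_onto B A.
Proof.
move=> [cA _] AB BU hstar.
exists (fun z => (1 - z.2) *: z.1 + z.2 *: xi A z.1).
split; last split; last split; last split.
- apply/subspace_continuousP => z Sz.
  have Bz : B z.1 by case: Sz.
  have c1 : (fun w : 'rV[R]_d * R => w.1) @ within (B `*` [set t | 0 <= t <= 1]) (nbhs z) --> z.1.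
    apply: cvg_within_filter; exact: cvg_fst.
  have c2 : (fun w : 'rV[R]_d * R => w.2) @ within (B `*` [set t | 0 <= t <= 1]) (nbhs z) --> z.2.
    apply: cvg_within_filter; exact: cvg_snd.
  have c3 : (fun w : 'rV[R]_d * R => xi A w.1) @ within (B `*` [set t | 0 <= t <= 1]) (nbhs z) --> xi A z.1.
    apply/cvgrPdist_lt => e e0.
    have [r r0 hr] := xi_cont _ _ cA (BU _ Bz) e e0.
    have h1 := (cvgrPdist_lt _ _).1 c1 r r0.
    have h2 := withinT (B `*` [set t : R | 0 <= t <= 1]) (nbhs_filter z).
    near=> w.
    apply: hr; last by near: w; exact: h1.
    apply: BU; have : (B `*` [set t : R | 0 <= t <= 1]) w by near: w; exact: h2.
    by case.
  apply: cvgD; apply: cvgZ => //.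
  apply: cvgB => //; exact: cvg_cst.
- move=> x t Bx ht; apply: (hstar x Bx); exists t => //.
- by move=> x Bx /=; rewrite subr0 scale1r scale0r addr0.
- by move=> x Bx /=; rewrite subrr scale0r add0r scale1r; case: (xi_nearest _ _ (BU _ Bx)).
- by move=> a t Aa ht /=; rewrite xi_id // -scalerDl subrK scale1r.
Unshelve. all: by end_near.
Qed.
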